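(* Let $(\bar p,\bar x)$ be a competitive equilibrium of $\mathcal E^{N,\beta}$ with $\bar p\in\mathbb R^N_{++}$ and all $\bar x_{in}>0$, where each $u_{in}$ is twice differentiable with $u_{in}'>0$, $u_{in}''<0$ on $\mathbb R_{++}$. For every $u\in\mathbb R^N$, writing $v_n=u_n/\bar p_n$ ($n=1,\dots,N$), $$S(u):=\sum_{i\in I_N}\sum_{n=1}^N\frac{\bar r_{in}}{\bar p_n}\bigl(u_n-\bar p_n\Lambda_i(u)\bigr)^2=\frac12\sum_{m,n=1}^Nw_{mn}(v_m-v_n)^2,$$ where $w_{mn}=\sum_{i\in I_N}\bar r_i^0\bar m_{im}\bar m_{in}=\sum_{i\in I_N}\frac{(\bar p_m\bar r_{im})(\bar p_n\bar r_{in})}{\bar r_i^0}$.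
   Context: For $N\ge1$, $\beta\in(0,1)$, the economy $\mathcal E^{N,\beta}$ has finite agent set $I_N$, commodities $0,\dots,N$, utilities $U_i(x_i)=\sum_{n=0}^N\beta^nu_{in}(x_{in})$, endowments in $\mathbb R_+^{N+1}$; price of commodity 0 is 1 and $p=(p_1,\dots,p_N)$; each agent maximizes $U_i$ subject to the budget constraint valued at $p$; an equilibrium $(\bar p,\bar x)$ has each $\bar x_i$ optimal at $\bar p$ and markets clearing. Equilibrium quantities: $\bar r_{in}=u_{in}'(\bar x_{in})/(-u_{in}''(\bar x_{in}))$, $\bar r_i^0=\sum_{n=1}^N\bar p_n\bar r_{in}$, $\bar m_{in}=\bar p_n\bar r_{in}/\bar r_i^0$, $\Lambda_i(q)=\sum_{n=1}^N\bar r_{in}q_n/\bar r_i^0$. *)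

(* Defs.v *)
From HB Require Import structures.
From mathcomp Require Import all_boot all_order all_algebra.
From mathcomp Require Import all_classical all_reals all_analysis.
Set Implicit Arguments. Unset Strict Implicit. Unset Printing Implicit Defensive.
Import Order.TTheory GRing.Theory Num.Theory.
Local Open Scope ring_scope.

Section Economy.
Variables (R : realType) (I : finType) (N : nat).

(* Commodities are 'I_N.+1 (0..N); commodity j+1 (j : 'I_N) is [lift ord0 j].
   Prices p : 'I_N -> R are the prices p_1..p_N; commodity 0 has price 1. *)
Definition price (p : 'I_N -> R) (k : 'I_N.+1) : R :=
  match unlift ord0 k with None => 1 | Some j => p j end.

Definition Util (beta : R) (u : I -> 'I_N.+1 -> R -> R) (i : I)
  (y : 'I_N.+1 -> R) : R := \sum_(k < N.+1) beta ^+ k * u i k (y k).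

Definition consumption (y : 'I_N.+1 -> R) : Prop := forall k, 0 <= y k.

Definition in_budget (p : 'I_N -> R) (e : I -> 'I_N.+1 -> R) (i : I)
  (y : 'I_N.+1 -> R) : Prop :=
  \sum_(k < N.+1) price p k * y k <= \sum_(k < N.+1) price p k * e i k.

Definition equilibrium (beta : R) (u : I -> 'I_N.+1 -> R -> R)
  (e : I -> 'I_N.+1 -> R) (p : 'I_N -> R) (x : I -> 'I_N.+1 -> R) : Prop :=
  (forall i, consumption (x i) /\ in_budget p e i (x i) /\
     forall y, consumption y -> in_budget p e i y ->
       Util beta u i y <= Util beta u i (x i)) /\
  (forall k, \sum_(i : I) x i k = \sum_(i : I) e i k).

(* Equilibrium quantities; index j : 'I_N stands for commodity n = j+1. *)
Definition rbar (u : I -> 'I_N.+1 -> R -> R) (x : I -> 'I_N.+1 -> R)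
  (i : I) (j : 'I_N) : R :=
  derive1 (u i (lift ord0 j)) (x i (lift ord0 j)) /
    (- derive1 (derive1 (u i (lift ord0 j))) (x i (lift ord0 j))).

Definition rbar0 u x (p : 'I_N -> R) (i : I) : R :=
  \sum_(j < N) p j * rbar u x i j.

Definition mbar u x (p : 'I_N -> R) (i : I) (j : 'I_N) : R :=
  p j * rbar u x i j / rbar0 u x p i.

Definition Lambda u x (p : 'I_N -> R) (i : I) (q : 'I_N -> R) : R :=
  \sum_(j < N) rbar u x i j * q j / rbar0 u x p i.

Definition Sform u x (p : 'I_N -> R) (q : 'I_N -> R) : R :=
  \sum_(i : I) \sum_(j < N)
     rbar u x i j / p j * (q j - p j * Lambda u x p i q) ^+ 2.

Definition wmat u x (p : 'I_N -> R) (m n : 'I_N) : R :=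
  \sum_(i : I) rbar0 u x p i * mbar u x p i m * mbar u x p i n.

End Economy.

(* Main.v *)
Require Import Defs.
From HB Require Import structures.
From mathcomp Require Import all_boot all_order all_algebra.
From mathcomp Require Import all_classical all_reals all_analysis.
From mathcomp Require Import ring lra.
Import Order.TTheory GRing.Theory Num.Theory.
Local Open Scope ring_scope.
Lemma key (R : realFieldType) N (r p q : 'I_N -> R) :
 (forall j, p j != 0) -> (\sum_j p j * r j) != 0 ->
 \sum_j r j / p j * (q j - p j * (\sum_k r k * q k / (\sum_j p j * r j)))^+2 =
 2^-1 * \sum_m \sum_n ((\sum_j p j * r j) * (p m * r m / (\sum_j p j * r j))
    * (p n * r n / (\sum_j p j * r j))) * (q m / p m - q n / p n)^+2.
Proof.
move=> hp.
set R0 := \sum_j p j * r j => h0.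
pose a j := p j * r j; pose v j := q j / p j.
pose S1 := \sum_j a j * v j; pose S2 := \sum_j a j * v j ^+ 2.
have hL : \sum_k r k * q k / R0 = S1 / R0.
  rewrite /S1 mulr_suml; apply: eq_bigr => k _; rewrite /a /v; field; rewrite ?h0 ?hp //=; try apply/andP; split; rewrite ?h0 ?hp //.
rewrite hL.
have -> : \sum_j r j / p j * (q j - p j * (S1 / R0)) ^+ 2 =
   \sum_j (a j * v j ^+ 2 - 2 * (S1/R0) * (a j * v j) + (S1/R0)^+2 * a j).
  apply: eq_bigr => j _; rewrite /a /v; field; rewrite ?h0 ?hp //=; try apply/andP; split; rewrite ?h0 ?hp //.
rewrite big_split sumrB /= -!mulr_sumr -/S1 -/S2 -/R0.
have -> : \sum_m \sum_n (R0 * (p m * r m / R0) * (p n * r n / R0)) * (q m / p m - q n / p n) ^+ 2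
  = \sum_m (a m * v m ^+ 2 + a m * S2 / R0 - 2 * (a m * v m) * S1 / R0).
  apply: eq_bigr => m _.
  have -> : \sum_n (R0 * (p m * r m / R0) * (p n * r n / R0)) * (q m / p m - q n / p n) ^+ 2
    = \sum_n (a m * v m ^+ 2 / R0 * a n + a m / R0 * (a n * v n ^+ 2) - 2 * (a m * v m) / R0 * (a n * v n)).
    apply: eq_bigr => n _; rewrite /a /v; field; rewrite h0 !hp //.
  rewrite !big_split /= sumrN -!mulr_sumr -/S1 -/S2 -/R0.
  field; rewrite ?h0 //.
rewrite !big_split /= sumrN -!mulr_suml -/S1 -/S2 -/R0.
rewrite -mulr_sumr -/S1.
field; rewrite ?h0 //.
Qed.

Theorem lemma6 (R : realType) (I : finType) (N : nat) (beta : R)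
  (u : I -> 'I_N.+1 -> R -> R) (e : I -> 'I_N.+1 -> R)
  (p : 'I_N -> R) (x : I -> 'I_N.+1 -> R) :
  (0 < N)%N -> 0 < beta < 1 ->
  (forall i k, 0 <= e i k) ->
  (forall i k (t : R), 0 < t ->
     derivable (u i k) t 1 /\ derivable (derive1 (u i k)) t 1 /\
     0 < derive1 (u i k) t /\ derive1 (derive1 (u i k)) t < 0) ->
  equilibrium beta u e p x ->
  (forall j, 0 < p j) ->
  (forall i k, 0 < x i k) ->
  forall q : 'I_N -> R,
    let v := fun j => q j / p j in
    Sform u x p q =
      2^-1 * \sum_(m < N) \sum_(n < N) wmat u x p m n * (v m - v n) ^+ 2 /\
    (forall m n : 'I_N, wmat u x p m n =
       \sum_(i : I) (p m * rbar u x i m) * (p n * rbar u x i n) / rbar0 u x p i).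
Proof.
move=> N0 _ _ hu _ hp hx q v.
have hr : forall i j, 0 < rbar u x i j.
  move=> i j; rewrite /rbar.
  have [_ [_ [h1 h2]]] := hu i (lift ord0 j) _ (hx i (lift ord0 j)).
  by apply: divr_gt0 => //; rewrite oppr_gt0.
have h0 : forall i, rbar0 u x p i != 0.
  move=> i; apply: lt0r_neq0; rewrite /rbar0.
  rewrite (bigD1 (Ordinal N0)) //=; apply: ltr_pwDl.
    exact: mulr_gt0.
  by apply: sumr_ge0 => j _; apply: mulr_ge0; apply: ltW.
have hpn : forall j, p j != 0 by move=> j; apply: lt0r_neq0.
split; last first.
  move=> m n; apply: eq_bigr => i _; rewrite /mbar; move: (h0 i); generalize (rbar0 u x p i) (rbar u x i m) (rbar u x i n) (p m) (p n) => a0 b0 c0 d0 e0 ha; field; exact: ha.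
transitivity (\sum_(i : I) 2^-1 * \sum_(m < N) \sum_(n < N)
   ((rbar0 u x p i) * (p m * rbar u x i m / rbar0 u x p i)
    * (p n * rbar u x i n / rbar0 u x p i)) * (q m / p m - q n / p n)^+2).
  apply: eq_bigr => i _; rewrite /Lambda; exact: (@key R N (rbar u x i) p q hpn (h0 i)).
rewrite -mulr_sumr; congr (_ * _); rewrite exchange_big; apply: eq_bigr => m _.
rewrite exchange_big; apply: eq_bigr => n _; rewrite /wmat mulr_suml.
by apply: eq_bigr.
Qed.
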